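(* Consider the multi-agent setting described in the context, with parameters $\alpha>0$ and $F\in\mathbb Z_{\ge0}$. Assume: - the set $\mathcal A$ of misbehaving agents is $F$-local; - the digraph $\mathcal D$ is $(2F+1)$-robust. Let $x_{\mathcal N}:[0,t_1)\to\mathbb R^{|\mathcal N|}$ be a trajectory of the normal agents. Then the derivatives $\frac{d}{dt}M(x_{\mathcal N}(t))$ and $\frac{d}{dt}m(x_{\mathcal N}(t))$ exist at almost all $t\in[0,t_1)$, and at almost all such $t$, $$\tfrac{d}{dt}M(x_{\mathcal N}(t))\in[-\alpha,0],\qquad \tfrac{d}{dt}m(x_{\mathcal N}(t))\in[0,\alpha].$$
   Context: Setting. Let $\mathcal D=(\mathcal V,\mathcal E)$ be a digraph with $\mathcal V=\{1,\dots,n\}$ and $n\ge2$. An edge $(i,j)\in\mathcal E$ means that agent $j$ receives information from agent $i$. The in-neighbor set of $i$ is $\mathcal V_i=\{j:(j,i)\in\mathcal E\}$, and $\mathcal J_i=\mathcal V_i\cup\{i\}$. - A nonempty $S\subset\mathcal V$ is $r$-reachable if some $i\in S$ has $|\mathcal V_i\setminus S|\ge r$. - $\mathcal D$ is $r$-robust if for every pair of nonempty disjoint subsets of $\mathcal V$, at least one of them is $r$-reachable. Dynamics and communication. Each agent has a scalar state with $\dot x_i(t)=u_i(t)$. Fix a strictly increasing $g:\mathbb R\to\mathbb R$ (not necessarily continuous). At time $t$, agent $i$ receives from each in-neighbor $j$ a value $g(x^i_j(t))$. The agents are partitioned into normal agents $\mathcal N$ and misbehaving agents $\mathcal A$. -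 A normal agent $j$ sends $g(x_j(t))$ to all its out-neighbors, so $x^i_j=x_j$, and updates via the FTRC protocol. - Misbehaving agents may use arbitrary inputs and may send arbitrary, possibly different, values to different out-neighbors. The only restriction is that $t\mapsto g(x^i_k(t))$ is Lebesgue measurable for all $k\in\mathcal A$ and $i\in\mathcal N$. - $\mathcal A$ is $F$-local if $|\mathcal V_i\cap\mathcal A|\le F$ for every $i\in\mathcal V\setminus\mathcal A$. FTRC protocol for a normal agent $i$ at time $t$: 1. Sort the received values $g(x^i_j(t))$, $j\in\mathcal V_i$. 2. If fewer than $F$ values are strictly larger than $g(x_i(t))$, remove all values strictly larger than $g(x_i(t))$; otherwise remove exactly the $F$ largest values. 3. Likewise, if fewer than $F$ values are strictly smaller than $g(x_i(t))$, remove all values strictly smaller; otherwise remove exactly the $F$ smallest values. 4. With $\mathcal R_i(t)$ the set of agents whose values were removed, set $u_i(t)=\alpha\,\mathrm{sign}\big(\sum_{j\in\mathcal J_i\setminus\mathcal R_i(t)}(g(x^i_j(t))-g(x_i(t)))\big)$, where $x^i_i=x_i$ and $\mathrm{sign}(0)=0$. Trajectories and auxiliary functions. Write $x_{\mathcal N}=(x_{\mathcal N_1},\dots,x_{\mathcal N_{|\mathcal N|}})^T$ for a fixed ordering of $\mathcal N$. A trajectory of the normal agents on an interval $I\ni0$ is an absolutely continuous $x_{\mathcal N}:I\to\mathbb R^{|\mathcal N|}$ with $\dot x_{\mathcal N_k}(t)=u_{\mathcal N_k}(t)$ for all $k$ and almost every $t\in I$, where the $u$'s are given by the FTRC protocol.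 Define $M(x)=\max_k x_k$ and $m(x)=\min_k x_k$ for $x\in\mathbb R^{|\mathcal N|}$. *)

(* Defs.v *)
From HB Require Import structures.
From mathcomp Require Import all_boot all_order all_algebra.
From mathcomp Require Import all_classical all_reals all_analysis.
Set Implicit Arguments.
Unset Strict Implicit.
Unset Printing Implicit Defensive.
Import Order.TTheory GRing.Theory Num.Theory numFieldNormedType.Exports.
Local Open Scope ring_scope.

(* Lebesgue-measurable subsets of R: the Caratheodory sigma-algebra of the
   Lebesgue outer measure (= completion of the Borel sets), i.e. the
   sigma-algebra of the completed Lebesgue measure. *)
Definition lebesgue_measurable_set {R : realType} (S : set R) : Prop :=
  ((((@wlength R idfun)^*)%mu).-cara.-measurable)%classic S.

Definition lebesgue_measurable_on {R : realType} (D : set R) (f : R -> R)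
  : Prop :=
  forall B : set R, measurable B -> lebesgue_measurable_set (D `&` f @^-1` B)%classic.

Definition abs_continuous_on {R : realType} (a b : R) (f : R -> R) : Prop :=
  forall eps : R, 0 < eps -> exists2 delta : R, 0 < delta &
    forall (k : nat) (s : 'I_k -> R * R),
      (forall i, a <= (s i).1 /\ (s i).1 <= (s i).2 /\ (s i).2 <= b) ->
      (forall i j, i != j -> (s i).2 <= (s j).1 \/ (s j).2 <= (s i).1) ->
      \sum_(i < k) ((s i).2 - (s i).1) < delta ->
      \sum_(i < k) `|f (s i).2 - f (s i).1| < eps.

Definition loc_abs_continuous {R : realType} (I : set R) (f : R -> R) : Prop :=
  forall a b : R, I a -> I b -> a <= b -> abs_continuous_on a b f.

Definition time_itv {R : realType} (t1 : \bar R) : set R :=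
  [set t : R | 0 <= t /\ (t%:E < t1)%E]%classic.

(* E j i  means  (j, i) is an edge: agent i receives information from j. *)
Definition in_nbrs {n : nat} (E : rel 'I_n) (i : 'I_n) : {set 'I_n} :=
  [set j | E j i].

Definition closed_in_nbrs {n : nat} (E : rel 'I_n) (i : 'I_n) : {set 'I_n} :=
  i |: in_nbrs E i.

Definition r_reachable {n : nat} (E : rel 'I_n) (S : {set 'I_n}) (r : nat)
  : Prop :=
  exists2 i, i \in S & (r <= #|in_nbrs E i :\: S|)%N.

Definition r_robust {n : nat} (E : rel 'I_n) (r : nat) : Prop :=
  forall S1 S2 : {set 'I_n}, S1 != finset.set0 -> S2 != finset.set0 -> [disjoint S1 & S2] ->
    r_reachable E S1 r \/ r_reachable E S2 r.

Definition F_local {n : nat} (E : rel 'I_n) (A : {set 'I_n}) (F : nat) : Prop :=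
  forall i, i \notin A -> (#|in_nbrs E i :&: A| <= F)%N.

(* Value g(x^i_j(t)) received by agent i from agent j at time t.
   x t j : state of (normal) agent j at time t;
   y t j i : the value x^i_j(t) chosen by a misbehaving agent j for its
   out-neighbour i (it sends g (y t j i)). *)
Definition received {R : realType} {n : nat} (g : R -> R) (A : {set 'I_n})
  (x : R -> 'I_n -> R) (y : R -> 'I_n -> 'I_n -> R) (t : R) (i j : 'I_n) : R :=
  if j \in A then g (y t j i) else g (x t j).

(* Steps 2-3 of FTRC: Rup (resp. Rdn) is the set of agents whose values are
   removed as "too large" (resp. "too small"), given the received values v
   over the in-neighbour set Vi and own value c = g(x_i(t)):
   if fewer than F values are > c, all of them are removed; otherwise exactly
   F largest ones (ties broken arbitrarily -- the resulting sum does not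
   depend on the tie-breaking). *)
Definition ftrc_removed {R : realType} {n : nat} (F : nat) (Vi : {set 'I_n})
  (v : 'I_n -> R) (c : R) (Rup Rdn : {set 'I_n}) : Prop :=
  let up := [set j in Vi | c < v j] in
  let dn := [set j in Vi | v j < c] in
  [/\ Rup \subset up, #|Rup| = minn F #|up| &
      (forall j k, j \in Rup -> k \in up :\: Rup -> v k <= v j)] /\
  [/\ Rdn \subset dn, #|Rdn| = minn F #|dn| &
      (forall j k, j \in Rdn -> k \in dn :\: Rdn -> v j <= v k)].

Definition ftrc_input {R : realType} {n : nat} (g : R -> R) (A : {set 'I_n})
  (E : rel 'I_n) (alpha : R) (x : R -> 'I_n -> R) (y : R -> 'I_n -> 'I_n -> R)
  (t : R) (i : 'I_n) (Rup Rdn : {set 'I_n}) : R :=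
  alpha * Num.sg (\sum_(j in closed_in_nbrs E i :\: (Rup :|: Rdn))
                    ((if j == i then g (x t i) else received g A x y t i j)
                     - g (x t i))).

Definition ftrc_trajectory {R : realType} {n : nat} (g : R -> R)
  (A : {set 'I_n}) (E : rel 'I_n) (F : nat) (alpha : R) (I : set R)
  (x : R -> 'I_n -> R) (y : R -> 'I_n -> 'I_n -> R) : Prop :=
  forall i, i \notin A ->
    loc_abs_continuous I (fun t => x t i) /\
    {ae (@lebesgue_measure R), forall t, I t ->
       derivable (fun s => x s i) t 1 /\
       exists Rup Rdn,
         ftrc_removed F (in_nbrs E i) (received g A x y t i) (g (x t i))
           Rup Rdn /\
         derive1 (fun s => x s i) t = ftrc_input g A E alpha x y t i Rup Rdn}.

(* M and m over the normal agents (N = complement of A, assumed nonempty). *)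
Definition maxN {R : realType} {n : nat} (A : {set 'I_n}) (x : 'I_n -> R) : R :=
  fine (\big[Order.max/-oo%E]_(i | i \notin A) (x i)%:E)%E.
Definition minN {R : realType} {n : nat} (A : {set 'I_n}) (x : 'I_n -> R) : R :=
  fine (\big[Order.min/+oo%E]_(i | i \notin A) (x i)%:E)%E.

(* Main.v *)
Require Import Defs.
From HB Require Import structures.
From mathcomp Require Import all_boot all_order all_algebra.
From mathcomp Require Import all_classical all_reals all_analysis.
Import Order.TTheory GRing.Theory Num.Theory numFieldNormedType.Exports.
Local Open Scope classical_set_scope.
Local Open Scope ring_scope.

Section A.
Variable R : realType.

Definition q (f : R -> R) (t h : R) : R := h^-1 * (f (h + t) - f t).

Lemma derivable_q (f : R -> R) (t : R) : derivable f t 1 = cvg (q f t @ 0^').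
Proof.
rewrite /derivable; set F := (fun h : R => _).
suff -> : F = q f t by [].
by apply/funext => h; rewrite /F /q /shift /= [h%:A]mulr1.
Qed.

Lemma q_cvg (f : R -> R) (t : R) : derivable f t 1 -> q f t @ 0^' --> derive1 f t.
Proof.
move=> H; have := H; rewrite derivable_q /derive1.
suff -> : (fun h => h^-1 *: (f (h + t) - f t)) = q f t by [].
by apply/funext.
Qed.

Lemma q_derive (f : R -> R) (t d : R) : q f t @ 0^' --> d -> derivable f t 1 /\ derive1 f t = d.
Proof.
move=> H; split; first by rewrite derivable_q; apply/cvg_ex; exists d.
rewrite /derive1.
suff -> : (fun h => h^-1 *: (f (h + t) - f t)) = q f t by exact: cvg_lim.
by apply/funext.
Qed.

Lemma maxN_spec n (A : {set 'I_n}) (v : 'I_n -> R) : (exists i, i \notin A) ->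
  exists2 k, k \notin A & maxN A v = v k /\ forall i, i \notin A -> v i <= v k.
Proof.
move=> [j Hj].
have [k Pk Hk] := @Order.TotalTheory.eq_bigmax _ _ _ (-oo)%E j (fun i => i \notin A) (fun i => (v i)%:E) Hj (fun i _ => leNye _).
exists k => //; split; first by rewrite /maxN Hk.
move=> i Hi; rewrite -lee_fin -Hk.
exact: (@Order.TotalTheory.le_bigmax_cond _ _ _ (-oo)%E i (fun i => i \notin A) (fun i => (v i)%:E) Hi).
Qed.

Lemma minN_spec n (A : {set 'I_n}) (v : 'I_n -> R) : (exists i, i \notin A) ->
  exists2 k, k \notin A & minN A v = v k /\ forall i, i \notin A -> v k <= v i.
Proof.
move=> [j Hj].
have [k Pk Hk] := @Order.TotalTheory.eq_bigmin _ _ _ (+oo)%E j (fun i => i \notin A) (fun i => (v i)%:E) Hj (fun i _ => leey _).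
exists k => //; split; first by rewrite /minN Hk.
move=> i Hi; rewrite -lee_fin -Hk.
exact: (@Order.TotalTheory.bigmin_le_cond _ _ _ (+oo)%E i (fun i => i \notin A) (fun i => (v i)%:E) Hi).
Qed.


Lemma crossing_iso (f1 f2 : R -> R) t :
  [/\ derivable f1 t 1, derivable f2 t 1, f1 t = f2 t & derive1 f1 t != derive1 f2 t] ->
  exists2 e : R, 0 < e & forall s, s != t -> `|t - s| < e -> f1 s != f2 s.
Proof.
move=> [d1 d2 e12 nd].
have c := cvgB (q_cvg _ _ d1) (q_cvg _ _ d2).
have D0 : 0 < `|derive1 f1 t - derive1 f2 t| by rewrite normr_gt0 subr_eq0.
have := (cvgrPdist_lt _ _).1 (c (dnbhs_filter _)) _ D0. move=> H; have [e e0 He] := (nbhs_normP _ _).1 (H (dnbhs_filter _)).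
exists e => // s st ts; apply/eqP => fs.
have hs : s - t != 0 by rewrite subr_eq0.
have := He (s - t); rewrite /ball_ /= sub0r normrN distrC => /(_ ts hs).
have -> : (q f1 t - q f2 t) (s - t) = 0.
  rewrite -[LHS]/(q f1 t (s - t) - q f2 t (s - t)) /q subrK fs e12.
  by rewrite subrr.
by rewrite subr0 ltxx.
Qed.

Definition Zset (f1 f2 : R -> R) := [set t | [/\ derivable f1 t 1, derivable f2 t 1, f1 t = f2 t & derive1 f1 t != derive1 f2 t]].

Lemma crossing_countable (f1 f2 : R -> R) : countable (Zset f1 f2).
Proof.
have [g Hg] : {g : R -> rat & forall t, Zset f1 f2 t ->
    exists2 e : R, 0 < e & (forall s, s != t -> `|t - s| < e -> ~ Zset f1 f2 s)
       /\ `|t - ratr (g t)| < e / 2}.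
  apply: (@choice _ _ (fun t r => Zset f1 f2 t -> exists2 e : R, 0 < e & (forall s, s != t -> `|t - s| < e -> ~ Zset f1 f2 s) /\ `|t - ratr r| < e / 2)) => t.
  have [Zt|nZt] := pselect (Zset f1 f2 t); last by exists 0%Q.
  have [e e0 He] := crossing_iso _ _ _ Zt.
  have e20 : 0 < e / 2 by rewrite divr_gt0.
  have lt12 : t - e / 2 < t + e / 2 by rewrite ltrBlDr -addrA ltrDl addr_gt0.
  have [r Hr] := rat_in_itvoo lt12.
  exists r => _; exists e => //; split.
    by move=> s st ts [_ _ fs _]; move: (He s st ts); rewrite fs eqxx.
  by move: Hr; rewrite in_itv /= => /andP[h1 h2]; rewrite ltr_distlC h1 h2.
apply/countable_injP; exists (fun t => pickle (g t)) => t s.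
rewrite !inE => Zt Zs /= /(pcan_inj (@pickleK _)) gts.
apply/eqP/negPn/negP => ts.
have [et et0 [Ht Hrt]] := Hg t Zt.
have [es es0 [Hs Hrs]] := Hg s Zs.
have tri : `|t - s| < et / 2 + es / 2.
  rewrite (_ : t - s = (t - ratr (g t)) + (ratr (g s) - s)); last by rewrite gts addrA subrK.
  by rewrite (le_lt_trans (ler_normD _ _))// ltrD// distrC.
case: (leP es et) => h.
  apply: (Ht s _ _ Zs); first by rewrite eq_sym.
  by rewrite (lt_le_trans tri)// [leRHS](splitr et) lerD2l ler_pM2r.
apply: (Hs t ts _ Zt).
by rewrite distrC (lt_le_trans tri)// [leRHS](splitr es) lerD2r ler_pM2r// ltW.
Qed.

Lemma crossing_ae (f1 f2 : R -> R) :
  {ae (@lebesgue_measure R), forall t, ~ Zset f1 f2 t}.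
Proof.
exists (Zset f1 f2); split.
- apply: countable_measurable; last exact: crossing_countable.
  by move=> t; exact: measurable_set1.
- by apply: countable_lebesgue_measure0; exact: crossing_countable.
- by move=> t /= /contrapT.
Qed.
Lemma cont_shift (f : R -> R) t : derivable f t 1 -> (fun h => f (h + t)) @ 0^' --> f t.
Proof.
move=> df.
have h0 : (fun h : R => h) @ 0^' --> (0:R) by exact: cvg_within.
have c := cvgM h0 (q_cvg _ _ df).
have c2 := cvgD (cvg_cst (f t)) (c (dnbhs_filter _)).
rewrite mul0r addr0 in c2.
apply: (cvg_trans _ (c2 (dnbhs_filter _) (dnbhs_filter _))); apply: near_eq_cvg.
near=> h.
have hn : h != 0 by near: h; exact: nbhs_dnbhs_neq.
rewrite -[LHS]/(f t + h * (h^-1 * (f (h + t) - f t))) mulVKf// addrC subrK.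
Unshelve. all: by end_near.
Qed.

Lemma max_deriv n (N : pred 'I_n) (f : 'I_n -> R -> R) (Phi : R -> R) t k :
  (forall s, exists2 k, N k & Phi s = f k s /\ forall i, N i -> f i s <= f k s) ->
  (forall i, N i -> derivable (f i) t 1) ->
  (forall i j, N i -> N j -> f i t = f j t -> derive1 (f i) t = derive1 (f j) t) ->
  N k -> Phi t = f k t ->
  q Phi t @ 0^' --> derive1 (f k) t.
Proof.
move=> spec der cross Nk Pk.
have maxt : forall i, N i -> f i t <= f k t.
  by have [k0 Nk0 [P0 H0]] := spec t; move=> i Ni; rewrite -Pk P0 H0.
apply/(cvgrPdist_lt _ _).2 => eps eps0.
have Ha : \forall h \near 0^', forall i, N i -> `|derive1 (f i) t - q (f i) t h| < eps.
  apply: filter_forall => i.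
  case: (boolP (N i)) => Ni; last by apply: nearW.
  have := (cvgrPdist_lt _ _).1 (q_cvg _ _ (der i Ni)) _ eps0.
  by move=> /(_ (dnbhs_filter _)); apply: filterS => h H _.
have Hb : \forall h \near 0^', forall i, N i -> f i t < f k t -> f i (h + t) < f k (h + t).
  apply: filter_forall => i.
  case: (boolP (N i && (f i t < f k t))) => [/andP[Ni lt]|nb]; last first.
    by apply: nearW => h Ni lt; case/negP: nb; rewrite Ni lt.
  have c := cvgB (cont_shift _ _ (der k Nk)) (cont_shift _ _ (der i Ni)).
  have pos : 0 < f k t - f i t by rewrite subr_gt0.
  have := (cvgrPdist_lt _ _).1 (c (dnbhs_filter _)) _ pos.
  move=> /(_ (dnbhs_filter _)); apply: filterS => h H _ _.
  move: H; rewrite ltr_distlC subrr => /andP[H1 _].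
  by rewrite -subr_gt0.
apply: filterS2 Ha Hb => h Ha Hb.
have [k' Nk' [P' H']] := spec (h + t).
have ek' : f k' t = f k t.
  apply/eqP; rewrite eq_le maxt // leNgt; apply/negP => lt.
  by have := Hb k' Nk' lt; rewrite ltNge H'.
rewrite /q P' Pk -ek' (cross k k' Nk Nk' (esym ek')).
exact: Ha.
Qed.

Lemma ftrc_sum_max n (E : rel 'I_n) (A : {set 'I_n}) (g : R -> R) F x y t k Rup Rdn :
  {homo g : a b / a < b} -> F_local E A F -> k \notin A ->
  (forall j, j \notin A -> x t j <= x t k) ->
  ftrc_removed F (in_nbrs E k) (received g A x y t k) (g (x t k)) Rup Rdn ->
  \sum_(j in closed_in_nbrs E k :\: (Rup :|: Rdn))
     ((if j == k then g (x t k) else received g A x y t k j) - g (x t k)) <= 0.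
Proof.
move=> gh FL kA mx [[sub card _] _].
set v := received g A x y t k; set c := g (x t k).
set up := [set j in in_nbrs E k | c < v j].
have upA : up \subset in_nbrs E k :&: A.
  apply/fintype.subsetP => j; rewrite !inE => /andP[Ej cv]; rewrite Ej /=.
  apply/negPn/negP => jA; move: cv; rewrite /v /received (negbTE jA) /c.
  have := mx j jA; rewrite le_eqVlt => /orP[/eqP->|/gh h]; first by rewrite ltxx.
  by rewrite ltNge ltW.
have upF : (#|up| <= F)%N := leq_trans (subset_leq_card upA) (FL k kA).
have Rup_eq : Rup = up.
  by apply/eqP; rewrite eqEcard sub card /= (minn_idPr upF) leqnn.
apply: sumr_le0 => j; rewrite !inE => /andP[nR Jj].
case: eqP => [_|jk]; first by rewrite subrr.
rewrite subr_le0 leNgt; apply/negP => cv.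
have Jn : j \in in_nbrs E k by move: Jj => /orP[/eqP//|Ejk]; rewrite /in_nbrs inE.
by move: nR; rewrite Rup_eq /up inE Jn cv.
Qed.

Lemma ftrc_sum_min n (E : rel 'I_n) (A : {set 'I_n}) (g : R -> R) F x y t k Rup Rdn :
  {homo g : a b / a < b} -> F_local E A F -> k \notin A ->
  (forall j, j \notin A -> x t k <= x t j) ->
  ftrc_removed F (in_nbrs E k) (received g A x y t k) (g (x t k)) Rup Rdn ->
  0 <= \sum_(j in closed_in_nbrs E k :\: (Rup :|: Rdn))
     ((if j == k then g (x t k) else received g A x y t k j) - g (x t k)).
Proof.
move=> gh FL kA mx [_ [sub card _]].
set v := received g A x y t k; set c := g (x t k).
set dn := [set j in in_nbrs E k | v j < c].
have dnA : dn \subset in_nbrs E k :&: A.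
  apply/fintype.subsetP => j; rewrite !inE => /andP[Ej cv]; rewrite Ej /=.
  apply/negPn/negP => jA; move: cv; rewrite /v /received (negbTE jA) /c.
  have := mx j jA; rewrite le_eqVlt => /orP[/eqP->|/gh h]; first by rewrite ltxx.
  by rewrite ltNge ltW.
have dnF : (#|dn| <= F)%N := leq_trans (subset_leq_card dnA) (FL k kA).
have Rdn_eq : Rdn = dn.
  by apply/eqP; rewrite eqEcard sub card /= (minn_idPr dnF) leqnn.
apply: sumr_ge0 => j; rewrite !inE => /andP[nR Jj].
case: eqP => [_|jk]; first by rewrite subrr.
rewrite subr_ge0 leNgt; apply/negP => cv.
have Jn : j \in in_nbrs E k by move: Jj => /orP[/eqP//|Ejk]; rewrite /in_nbrs inE.
by move: nR; rewrite Rdn_eq /dn inE Jn cv orbT.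
Qed.
End A.
Arguments q {R}.
Arguments q_cvg {R}.
Arguments q_derive {R f t d}.
Arguments derivable_q {R}.
Arguments maxN_spec {R}.
Arguments minN_spec {R}.
Arguments crossing_iso {R}.
Arguments Zset {R}.
Arguments crossing_countable {R}.
Arguments crossing_ae {R}.
Arguments cont_shift {R}.
Arguments max_deriv {R}.
Arguments ftrc_sum_max {R n E A g F x y t k Rup Rdn}.
Arguments ftrc_sum_min {R n E A g F x y t k Rup Rdn}.


Theorem theorem3 (R : realType) (n : nat) (E : rel 'I_n) (A : {set 'I_n})
  (g : R -> R) (alpha : R) (F : nat) (t1 : \bar R)
  (x : R -> 'I_n -> R) (y : R -> 'I_n -> 'I_n -> R) :
  (2 <= n)%N ->
  (exists i : 'I_n, i \notin A) ->
  {homo g : a b / a < b} ->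
  0 < alpha ->
  (forall k i, k \in A -> i \notin A ->
     lebesgue_measurable_on (time_itv t1) (fun t => g (y t k i))) ->
  F_local E A F ->
  r_robust E (2 * F + 1) ->
  (0%:E < t1)%E ->
  ftrc_trajectory g A E F alpha (time_itv t1) x y ->
  {ae (@lebesgue_measure R), forall t, time_itv t1 t ->
     derivable (fun s => maxN A (x s)) t 1 /\
     - alpha <= derive1 (fun s => maxN A (x s)) t <= 0} /\
  {ae (@lebesgue_measure R), forall t, time_itv t1 t ->
     derivable (fun s => minN A (x s)) t 1 /\
     0 <= derive1 (fun s => minN A (x s)) t <= alpha}.
Proof.
move=> n2 Nne gh alpha0 _ FL _ t10 Htraj.
have FF : Filter (almost_everywhere (@lebesgue_measure R)) := ae_filter_ringOfSetsType _.
have FF' : Filter (nbhs (almost_everywhere (@lebesgue_measure R))) := FF.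
have Hall : {ae (@lebesgue_measure R), forall t, forall i, i \notin A -> time_itv t1 t ->
    derivable (fun s => x s i) t 1 /\
       exists Rup Rdn,
         ftrc_removed F (in_nbrs E i) (received g A x y t i) (g (x t i))
           Rup Rdn /\
         derive1 (fun s => x s i) t = ftrc_input g A E alpha x y t i Rup Rdn}.
  apply: filter_forall => i.
  case: (boolP (i \in A)) => iA; first by apply: aeW => t /negP.
  by have [_ H] := Htraj i iA; apply: filterS H => t H _.
have Hcr : {ae (@lebesgue_measure R), forall t, forall i j,
    ~ Zset (fun s => x s i) (fun s => x s j) t}.
  apply: filter_forall => i; apply: filter_forall => j; exact: crossing_ae.
have key : forall t, time_itv t1 t ->
    (forall i, i \notin A -> time_itv t1 t ->
    derivable (fun s => x s i) t 1 /\
       exists Rup Rdn,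
         ftrc_removed F (in_nbrs E i) (received g A x y t i) (g (x t i))
           Rup Rdn /\
         derive1 (fun s => x s i) t = ftrc_input g A E alpha x y t i Rup Rdn) ->
    (forall i j, ~ Zset (fun s => x s i) (fun s => x s j) t) ->
    (forall i, i \notin A -> derivable (fun s => x s i) t 1) /\
    (forall i j, i \notin A -> j \notin A -> x t i = x t j ->
       derive1 (fun s => x s i) t = derive1 (fun s => x s j) t).
  move=> t It Hd Hc; split; first by move=> i iA; exact: (Hd i iA It).1.
  move=> i j iA jA e; apply/eqP/negPn/negP => ne.
  by apply: (Hc i j); split => //; [exact: (Hd i iA It).1|exact: (Hd j jA It).1].
split.
  apply: filterS2 Hall Hcr => t Hd Hc It.
  have [der cross] := key t It Hd Hc.
  have [k kA [Mk Hk]] := maxN_spec _ A (x t) Nne.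
  have c := @max_deriv R n (fun i => i \notin A) (fun i s => x s i)
    (fun s => maxN A (x s)) t k (fun s => maxN_spec _ A (x s) Nne) der cross kA Mk.
  have [dM ->] := q_derive c.
  split => //.
  have [_ [Rup [Rdn [rem ->]]]] := Hd k kA It.
  have := ftrc_sum_max gh FL kA Hk rem.
  rewrite /ftrc_input; set S := \sum_(_ in _) _ => S0.
  have [S_lt|S_eq] : S < 0 \/ S = 0.
    by move: S0; rewrite le_eqVlt => /orP[/eqP->|->]; [right|left].
    by rewrite ltr0_sg // mulrN1 lexx /= oppr_le0 ltW.
  by rewrite S_eq sgr0 mulr0 lexx oppr_le0 ltW.
apply: filterS2 Hall Hcr => t Hd Hc It.
have [der cross] := key t It Hd Hc.
have [k kA [mk Hk]] := minN_spec _ A (x t) Nne.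
have spec' : forall s, exists2 k, k \notin A & - minN A (x s) = - x s k /\
    forall i, i \notin A -> - x s i <= - x s k.
  move=> s; have [k' k'A [m' H']] := minN_spec _ A (x s) Nne.
  by exists k' => //; split; [rewrite m'|move=> i iA; rewrite lerN2 H'].
have der' : forall i, i \notin A -> derivable (- (fun s => x s i)) t 1.
  by move=> i iA; apply: derivableN; exact: der.
have cross' : forall i j, i \notin A -> j \notin A -> - x t i = - x t j ->
    derive1 (- (fun s => x s i)) t = derive1 (- (fun s => x s j)) t.
  move=> i j iA jA /oppr_inj e.
  by rewrite !derive1N ?(cross i j iA jA e) //; exact: der.
have c := @max_deriv R n (fun i => i \notin A) (fun i => - (fun s => x s i))
    (fun s => - minN A (x s)) t k spec' der' cross' kA (congr1 -%R mk).
rewrite derive1N in c; last exact: der.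
have c2 := cvgN c.
rewrite opprK in c2.
have qe : - q (fun s => - minN A (x s)) t = q (fun s => minN A (x s)) t.
  apply/funext => h; rewrite -[LHS]/(- (h^-1 * (- minN A (x (h + t)) - - minN A (x t)))) /q.
  by rewrite -mulrN opprB opprK addrC.
rewrite qe in c2.
have [dm ->] := q_derive (c2 (dnbhs_filter _)).
split => //.
have [_ [Rup [Rdn [rem ->]]]] := Hd k kA It.
have := ftrc_sum_min gh FL kA Hk rem.
rewrite /ftrc_input; set S := \sum_(_ in _) _ => S0.
have [S_gt|S_eq] : 0 < S \/ S = 0.
  by move: S0; rewrite le_eqVlt => /orP[/eqP<-|->]; [right|left].
  by rewrite gtr0_sg // mulr1 lexx andbT ltW.
by rewrite S_eq sgr0 mulr0 lexx ltW.
Qed.
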